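(* Let $T$ be a finite tree rooted at a fixed non-leaf vertex $r$ and let $k\geq 1$. For each $0\leq i\leq k-1$, let $I_i$ be the graph on $V(T)$ in which distinct $u,v$ are adjacent iff $f_i(u)\cap f_i(v)\neq\emptyset$, where $f_i(u)=[s(p^i(u)),\,t(p^{k-1-i}(u))]$. Then for every $0\leq i\leq k-1$, $I_i$ is a supergraph of $T^k$, i.e. $E(T^k)\subseteq E(I_i)$.
   Context: $T^k$ is the graph on $V(T)$ in which distinct $u,v$ are adjacent iff $d_T(u,v)\leq k$, where $d_T$ is the distance in $T$. For vertices $u,v$, $u\preceq v$ ($u$ is an ancestor of $v$) means that $u$ lies on the unique path in $T$ from $r$ to $v$. For $u\neq r$, $p(u)$ is the neighbour of $u$ on the path from $u$ to $r$, and $p(r)=r$; $p^0(u)=u$ and $p^i(u)=p(p^{i-1}(u))$ for $i\geq 1$. Let $l_1,\ldots,l_m$ be the leaves (degree-1 vertices) of $T$ in the order in which they appear in some depth-first traversal of $T$ starting from $r$; for a vertex $u$, $L(u)=\{i: u\preceq l_i\}$, $s(u)=\min L(u)$, $t(u)=\max L(u)$. (Each $f_i(u)$ is a closed interval with $s(p^i(u))\leq t(p^{k-1-i}(u))$.) *)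

(* Defs.v *)
From mathcomp Require Import all_boot.
From mathcomp Require Import boolp.
Set Implicit Arguments. Unset Strict Implicit. Unset Printing Implicit Defensive.

Section TreeDefs.
Variables (V : finType) (e : rel V).

Definition simple_graph : Prop := irreflexive e /\ symmetric e.

Definition acyclic : Prop :=
  forall c : seq V, uniq c -> 2 < size c -> ~~ cycle e c.

Definition is_tree : Prop :=
  simple_graph /\ (forall u v, connect e u v) /\ acyclic.

Definition deg (v : V) : nat := #|[set w | e v w]|.
Definition is_leaf (v : V) : bool := deg v == 1.

Definition dist_le (u v : V) (n : nat) : Prop :=
  exists s : seq V, [/\ path e u s, last u s = v & size s <= n].

Definition power_adj (n : nat) (u v : V) : Prop := u != v /\ dist_le u v n.

Variable r : V.

Definition anc (u v : V) : Prop :=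
  exists s : seq V, [/\ path e r s, last r s = v, uniq (r :: s) & u \in r :: s].

Definition par (u : V) : V :=
  if u == r then r else odflt u [pick w | e u w && `[< anc w u >] ].

(* ord is a depth-first traversal of T from r: every vertex listed once,
   starting at r, and each new vertex is a child of a vertex on the current
   stack, i.e. of an ancestor of the previously visited vertex *)
Definition dfs_order (ord : seq V) : Prop :=
  [/\ uniq ord, (forall v, v \in ord), nth r ord 0 = r &
      forall j, 0 < j < size ord -> anc (par (nth r ord j)) (nth r ord j.-1)].

Variable ord : seq V.

(* l_0, l_1, ... : leaves in order of appearance (0-based indices) *)
Definition leaves_seq : seq V := [seq v <- ord | is_leaf v].

Definition Lset (u : V) : seq nat :=
  [seq i <- iota 0 (size leaves_seq) | `[< anc u (nth r leaves_seq i) >] ].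

Definition s_ (u : V) : nat := \big[minn/size leaves_seq]_(i <- Lset u) i.
Definition t_ (u : V) : nat := \max_(i <- Lset u) i.

Definition f_lo (k i : nat) (u : V) : nat := s_ (iter i par u).
Definition f_hi (k i : nat) (u : V) : nat := t_ (iter (k.-1 - i) par u).

Definition I_adj (k i : nat) (u v : V) : Prop :=
  u != v /\ exists x : nat,
    (f_lo k i u <= x <= f_hi k i u) /\ (f_lo k i v <= x <= f_hi k i v).

End TreeDefs.

(* Main.v *)
Require Import Defs.
From mathcomp Require Import all_boot.
From mathcomp Require Import boolp.
From mathcomp Require Import zify.

Section Tree.
Variables (V : finType) (e : rel V).
Hypotheses (eirr : irreflexive e) (esym : symmetric e) (eacy : acyclic e).

Lemma spath_unique_aux n : forall x s1 s2, size s1 + size s2 < n ->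
  path e x s1 -> path e x s2 -> uniq (x::s1) -> uniq (x::s2) ->
  last x s1 = last x s2 -> s1 = s2.
Proof.
elim: n => // n IH x s1 s2 Hn p1 p2 u1 u2 hl.
case: (boolP (has (fun z => (z \in s2) && (z != last x s1)) s1)) =>
  [/hasP [z zs1 /andP [zs2 zy]] | /hasPn hn].
- case/splitPr: zs1 p1 u1 hl Hn zy => s1a s1b p1 u1 hl Hn zy.
  case/splitPr: zs2 p2 u2 hl Hn => s2a s2b p2 u2 hl Hn.
  rewrite !last_cat /= in hl zy.
  rewrite !cat_path /= in p1 p2.
  case/and3P: p1 => p1a e1 p1b; case/and3P: p2 => p2a e2 p2b.
  rewrite !size_cat /= in Hn.
  have hb1 : 0 < size s1b by case: (s1b) zy => //=; rewrite eqxx.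
  have Hb : s1b = s2b.
    apply: (IH z) => //; first by lia.
    + by move: u1; rewrite -cat_cons cat_uniq => /and3P[].
    + by move: u2; rewrite -cat_cons cat_uniq => /and3P[].
  have Ha : s1a = s2a.
    have Hsz : (size s1a).+1 + (size s2a).+1 < n by move: Hn hb1; clear; set a := size s1a; set b := size s1b; set c := size s2a; set d := size s2b; lia.
    apply: (rcons_injl z); apply: (IH x); first by rewrite !size_rcons.
    + by rewrite rcons_path p1a.
    + by rewrite rcons_path p2a.
    + have : uniq ((x :: rcons s1a z) ++ s1b) by rewrite /= -cats1 -catA.
      by rewrite cat_uniq => /and3P[].
    + have : uniq ((x :: rcons s2a z) ++ s2b) by rewrite /= -cats1 -catA.
      by rewrite cat_uniq => /and3P[].
    + by rewrite !last_rcons.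
  by rewrite Ha Hb.
- case: (eqVneq s1 s2) => // neq; exfalso.
  move: u1 u2 => /= /andP [xs1 u1] /andP [xs2 u2].
  have lastin : forall s, s != [::] -> last x s \in s.
    by case=> // a s _ /=; exact: mem_last.
  clear Hn; case/lastP: s2 neq p2 xs2 u2 hl hn => [|s2' y] neq p2 xs2 u2 hl hn.
    by move: (lastin s1 neq); rewrite hl /= => H; rewrite H in xs1.
  rewrite last_rcons in hl.
  have ne1 : s1 != [::].
    apply/eqP => s10; subst s1; move: xs2; rewrite -hl /= mem_rcons in_cons eqxx.
    done.
  move: u2; rewrite rcons_uniq => /andP [ys2' u2'].
  move: xs2; rewrite mem_rcons in_cons negb_or => /andP [_ xs2'].
  apply: (negP (eacy (x :: s1 ++ rev s2') _ _)).
  + rewrite /= mem_cat mem_rev negb_or xs1 xs2' /= cat_uniq u1 rev_uniq u2' andbT /=.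
    apply/hasPn => z; rewrite mem_rev => zs2'; apply/negP => zs1.
    have := hn z zs1; rewrite hl mem_rcons in_cons zs2' orbT /=.
    by apply/negP/negPn; apply/eqP => zy; rewrite -zy zs2' in ys2'.
  + rewrite /= size_cat size_rev.
    case: s2' {hn p2 u2' ys2' xs2'} neq => [|a s2'] neq /=; last first.
      by clear neq; case: s1 ne1 {xs1 u1 p1 hl} => //= b s1 _; lia.
    case: s1 ne1 neq p1 xs1 u1 hl => // b [|c s1] //= _ neq _ _ _ hl.
    by rewrite hl eqxx in neq.
  + rewrite /= rcons_cat cat_path p1 /= hl -rev_cons.
    have := rev_path e x (rcons s2' y); rewrite last_rcons belast_rcons => ->.
    by rewrite (@eq_path _ _ e) // => a b; rewrite esym.
Qed.


Lemma spath_unique {x s1 s2} :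
  path e x s1 -> path e x s2 -> uniq (x::s1) -> uniq (x::s2) ->
  last x s1 = last x s2 -> s1 = s2.
Proof. exact: (@spath_unique_aux (size s1 + size s2).+1 x s1 s2). Qed.

Variable r : V.
Hypothesis econn : forall u v, connect e u v.

Lemma rp_ex x : exists s, [&& path e r s, last r s == x & uniq (r :: s)].
Proof.
case/connectP: (econn r x) => p pp ->.
case: (shortenP pp) => p' pp' up' _.
by exists p'; rewrite pp' eqxx up'.
Qed.

Definition rp x := xchoose (rp_ex x).

Lemma rpP x : [/\ path e r (rp x), last r (rp x) = x & uniq (r :: rp x)].
Proof. by case/and3P: (xchooseP (rp_ex x)) => a /eqP b c. Qed.

Lemma rp_eq {s x} : path e r s -> last r s = x -> uniq (r :: s) -> rp x = s.
Proof.
move=> ps ls us; have [px lx ux] := rpP x.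
by apply: (spath_unique px ps ux us); rewrite lx ls.
Qed.

Lemma rp_inj {a b} : rp a = rp b -> a = b.
Proof. by move=> h; have [_ la _] := rpP a; have [_ lb _] := rpP b; rewrite -la -lb h. Qed.

Lemma rp_r : rp r = [::].
Proof. exact: rp_eq. Qed.

Definition an a b := a \in r :: rp b.

Lemma ancE u v : anc e r u v <-> an u v.
Proof.
split.
  by case=> s [ps ls us us']; rewrite /an (rp_eq ps ls us).
by move=> h; have [px lx ux] := rpP v; exists (rp v).
Qed.

Lemma an_refl u : an u u.
Proof. by have [_ lu _] := rpP u; rewrite /an -{1}lu mem_last. Qed.

Lemma rp_prefix {u v} : an u v -> exists t, rp v = rp u ++ t.
Proof.
rewrite /an in_cons => /orP[/eqP -> | uin]; first by exists (rp v); rewrite rp_r.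
have [pv lv uv] := rpP v.
case/splitPr: uin pv lv uv => s1 s2 pv lv uv.
exists s2.
have -> : rp u = rcons s1 u.
  apply: rp_eq; first by move: pv; rewrite cat_path rcons_path /= => /and3P[-> ->].
    by rewrite last_rcons.
  have : uniq ((r :: rcons s1 u) ++ s2) by rewrite /= -cats1 -catA.
  by rewrite cat_uniq => /and3P[].
by rewrite cat_rcons.
Qed.

Lemma an_trans {a b c} : an a b -> an b c -> an a c.
Proof.
move=> hab /rp_prefix [t]; rewrite /an => ->.
by rewrite -cat_cons mem_cat; apply/orP; left.
Qed.

Definition dep x := size (rp x).

Lemma an_dep {u v} : an u v -> dep u <= dep v.
Proof. by case/rp_prefix => t; rewrite /dep => ->; rewrite size_cat leq_addr. Qed.

Lemma an_dep_lt {u v} : an u v -> u != v -> dep u < dep v.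
Proof.
case/rp_prefix => t; rewrite /dep => h uv.
case: t h => [|a t] h; first by rewrite cats0 in h; rewrite (rp_inj h) eqxx in uv.
by rewrite h size_cat /= addnS ltnS leq_addr.
Qed.

Lemma an_r {u} : an u r -> u = r.
Proof. by rewrite /an rp_r mem_seq1 => /eqP. Qed.

Lemma L1 {x w} : e x w -> an w x -> rp x = rcons (rp w) x.
Proof.
move=> exw /[dup] hw /rp_prefix [t ht].
have wx : w != x by apply/eqP => wx; rewrite wx eirr in exw.
have [px lx ux] := rpP x; have [pw lw uw] := rpP w.
have xt : x \in t.
  case: t ht => [|a t] ht; first by rewrite cats0 in ht; rewrite (rp_inj ht) eqxx in wx.
  by move: lx; rewrite ht last_cat lw /= => <-; exact: mem_last.
have xnw : x \notin r :: rp w.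
  move: ux; rewrite ht -cat_cons cat_uniq => /and3P [_ /hasPn H _].
  exact: H.
apply: rp_eq.
- by rewrite rcons_path pw lw esym.
- by rewrite last_rcons.
- by rewrite -rcons_cons rcons_uniq xnw uw.
Qed.

Lemma par_spec {x} : x != r -> e x (par e r x) /\ an (par e r x) x.
Proof.
move=> xr.
have [px lx ux] := rpP x.
have [q hq] : exists q, rp x = rcons q x.
  move: lx; case/lastP: (rp x) => [/= lx|q y]; first by rewrite lx eqxx in xr.
  by rewrite last_rcons => ->; exists q.
rewrite hq in px.
set w := last r q.
have ewx : e w x by move: px; rewrite rcons_path => /andP[].
have awx : an w x by rewrite /an hq -rcons_cons mem_rcons in_cons mem_last orbT.
rewrite /par (negbTE xr); case: pickP => [w' /andP [h1 /asboolP h2] | H].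
  by split => //; apply/ancE.
exfalso; move: (H w); rewrite esym ewx /=.
by have -> : `[< anc e r w x >] by apply/asboolP/ancE.
Qed.

Lemma rp_par {x} : x != r -> rp x = rcons (rp (par e r x)) x.
Proof. by move=> xr; case: (par_spec xr) => h1 h2; exact: L1. Qed.

Lemma par_uniq {x w} : e x w -> an w x -> w = par e r x.
Proof.
move=> exw awx.
have xr : x != r.
  apply/eqP => xr; subst x; rewrite (an_r awx) eirr in exw; done.
apply: rp_inj; apply: (rcons_injl x).
by rewrite -(L1 exw awx) -rp_par.
Qed.

Lemma dep_par {x} : x != r -> dep x = (dep (par e r x)).+1.
Proof. by move=> xr; rewrite /dep {1}(rp_par xr) size_rcons. Qed.

Lemma an_par x : an (par e r x) x.
Proof.
case: (eqVneq x r) => [->|xr]; first by rewrite /par eqxx; exact: an_refl.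
by case: (par_spec xr).
Qed.

Lemma an_iter m x : an (iter m (par e r) x) x.
Proof.
elim: m => [|m IH]; first exact: an_refl.
by rewrite iterS; apply: an_trans (an_par _) IH.
Qed.

Lemma an_up_par {w x} : an w x -> w != x -> x != r /\ an w (par e r x).
Proof.
move=> awx wx.
have xr : x != r by apply/eqP => xr; subst x; rewrite (an_r awx) eqxx in wx.
split => //.
by move: awx; rewrite /an (rp_par xr) -rcons_cons mem_rcons in_cons (negbTE wx).
Qed.

Lemma edge_cases {x y} : e x y ->
  (y = par e r x /\ x != r) \/ (x = par e r y /\ y != r).
Proof.
move=> exy.
case: (boolP (an y x)) => H.
  left; split; first exact: par_uniq.
  apply/eqP => xr; subst x; rewrite (an_r H) eirr in exy; done.
right.
have [px lx ux] := rpP x.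
have hy : rp y = rcons (rp x) y.
  apply: rp_eq; first by rewrite rcons_path px lx.
    by rewrite last_rcons.
  by rewrite -rcons_cons rcons_uniq H ux.
have yr : y != r by apply/eqP => yr; move: H; rewrite yr /an mem_head.
split => //.
apply: rp_inj; apply: (rcons_injl y).
by rewrite -hy -rp_par.
Qed.


Lemma walk_lca {s u} : path e u s -> exists w,
  [/\ an w u, an w (last u s) & dep u - dep w + (dep (last u s) - dep w) <= size s].
Proof.
elim: s u => [|x1 s IH] u /=.
  by move=> _; exists u; rewrite an_refl subnn.
case/andP => eux px.
case: (edge_cases eux) => [[ex ur] | [ex xr]].
- subst x1; have [w [aw1 aw2 hd]] := IH _ px.
  exists w; split => //; first exact: an_trans aw1 (an_par u).
  have := dep_par ur; have := an_dep aw1; lia.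
- subst u; have [w [aw1 aw2 hd]] := IH _ px.
  case: (eqVneq w x1) => [wx | wx].
    subst w; exists (par e r x1); split.
    + exact: an_refl.
    + exact: an_trans (an_par x1) aw2.
    + have := dep_par xr; have := an_dep aw2; lia.
  have [_ apx] := an_up_par aw1 wx.
  exists w; split => //.
  have := dep_par xr; have := an_dep apx; lia.
Qed.

Lemma an_up {m w x} : an w x -> dep x - dep w <= m -> an (iter m (par e r) x) w.
Proof.
elim: m x => [|m IH] x awx hd.
  case: (eqVneq w x) => [->|wx]; first exact: an_refl.
  by have := an_dep_lt awx wx; lia.
rewrite iterSr.
case: (eqVneq w x) => [->|wx]; first by rewrite -iterSr; exact: an_iter.
have [xr apx] := an_up_par awx wx.
apply: IH => //; have := dep_par xr; lia.
Qed.

Lemma leaf_below x {y0} : y0 != r -> exists l, an x l && is_leaf e l.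
Proof.
move=> y0r.
case: (@arg_maxnP V x (fun l => an x l) dep (an_refl x)) => l axl lmax.
exists l; rewrite axl /=.
have lr : l != r.
  apply/eqP => lr; subst l; have xr := an_r axl; subst x.
  have := lmax y0 (mem_head _ _); rewrite /dep rp_r /= leqn0 => /eqP/size0nil h.
  have [_ ly _] := rpP y0; move: ly; rewrite h /= => ly.
  by rewrite ly eqxx in y0r.
rewrite /is_leaf /deg.
have -> : [set w | e l w] = [set par e r l].
  apply/setP => w; rewrite !inE.
  apply/idP/idP => [elw | /eqP ->]; last by case: (par_spec lr).
  case: (edge_cases elw) => [[-> _] | [lw wr]]; first by rewrite eqxx.
  have awl : an l w by rewrite lw; exact: an_par.
  have := lmax w (an_trans axl awl); rewrite /= (dep_par wr) -lw; lia.
by rewrite cards1.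
Qed.

Lemma bigmin_le {s : seq nat} {d j} : j \in s -> \big[minn/d]_(i <- s) i <= j.
Proof.
elim: s => // a s IH; rewrite in_cons big_cons => /orP [/eqP -> | js].
  exact: geq_minl.
exact: leq_trans (geq_minr _ _) (IH js).
Qed.

Lemma CL {ord X Y y0} : (forall v, v \in ord) -> y0 != r ->
  (exists y, an X y && an Y y) -> s_ e r ord X <= t_ e r ord Y.
Proof.
move=> allord y0r [y /andP [axy ayy]].
have [l /andP [ayl leaf]] := leaf_below y y0r.
have lL : l \in leaves_seq e ord by rewrite /leaves_seq mem_filter leaf allord.
set i := index l (leaves_seq e ord).
have hi : i < size (leaves_seq e ord) by rewrite index_mem.
have inL : forall Z, an Z y -> i \in Lset e r ord Z.
  move=> Z azy; rewrite /Lset mem_filter mem_iota /= add0n hi andbT.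
  by apply/asboolP/ancE; rewrite nth_index //; exact: an_trans azy ayl.
rewrite /s_ /t_; apply: leq_trans (bigmin_le (inL _ axy)) _.
by apply: (@leq_bigmax_seq _ _ xpredT (fun i => i)) => //; exact: inL.
Qed.

Lemma key ord k i u v : (forall x, x \in ord) -> 1 <= k -> i <= k.-1 ->
  power_adj e k u v -> I_adj e r ord k i u v.
Proof.
move=> allord k1 ik [uv [s [ps ls sz]]]; split => //.
have [y0 y0r] : exists y0, y0 != r.
  case: (eqVneq u r) => [ur|ur]; last by exists u.
  by exists v; rewrite -ur eq_sym.
have [w [awu awv hd]] := walk_lca ps; rewrite ls in awv hd.
set j := k.-1 - i.
have cross : forall a b, an w a -> an w b -> dep a - dep w + (dep b - dep w) <= k ->
    exists y, an (iter i (par e r) a) y && an (iter j (par e r) b) y.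
  move=> a b awa awb hab; case: (leqP (dep a - dep w) i) => hi.
    by exists b; rewrite (an_trans (an_up awa hi) awb) an_iter.
  exists a; rewrite an_iter /=; apply: (an_trans (an_up awb _) awa).
  rewrite /j; lia.
have same : forall a, exists y, an (iter i (par e r) a) y && an (iter j (par e r) a) y.
  by move=> a; exists a; rewrite !an_iter.
rewrite /f_lo /f_hi -/j.
exists (maxn (s_ e r ord (iter i (par e r) u)) (s_ e r ord (iter i (par e r) v))).
rewrite !geq_max leq_maxl leq_maxr /=.
have hk : dep u - dep w + (dep v - dep w) <= k by lia.
have hk' : dep v - dep w + (dep u - dep w) <= k by lia.
rewrite !(CL allord y0r) //; first [exact: same | exact: cross awu awv hk | exact: cross awv awu hk'].
Qed.

End Tree.

Theorem lemma7 (V : finType) (e : rel V) (r : V) (ord : seq V) (k : nat) :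
  is_tree e -> ~~ is_leaf e r -> dfs_order e r ord -> 1 <= k ->
  forall i, i <= k.-1 ->
  forall u v : V, power_adj e k u v -> I_adj e r ord k i u v.
Proof.
move=> [[eirr esym] [econn eacy]] _ [_ allord _ _] k1 i ik u v huv.
exact: (@key V e eirr esym eacy r econn ord k i u v allord k1 ik huv).
Qed.
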